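(* Let $R$ be a Bézout domain and let $A,B,C\in R^{n\times n}$ satisfy $ABA=ACA$. If $R_r(A)=R_r(AB)$ and $R_r(B)=R_r(BA)$, then $AB$ is similar to $CA$.
   Context: A Bézout domain is an integral domain in which every finitely generated ideal is principal. For $M\in R^{m\times n}$, $R_r(M)=\{Mx : x\in R^{n\times 1}\}\subseteq R^{m\times 1}$ is the column space of $M$. Two matrices $M,N\in R^{n\times n}$ are similar if $M=S^{-1}NS$ for some invertible $S\in R^{n\times n}$. *)

(* Defs.v *)
From HB Require Import structures.
From mathcomp Require Import all_boot all_order all_algebra.
Set Implicit Arguments. Unset Strict Implicit. Unset Printing Implicit Defensive.
Import GRing.Theory.
Local Open Scope ring_scope.

Definition in_ideal_gen (R : comNzRingType) (s : seq R) (x : R) : Prop :=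
  exists c : 'I_(size s) -> R, x = \sum_(i < size s) c i * s`_i.

Definition principal_gen (R : comNzRingType) (s : seq R) : Prop :=
  exists d : R, forall x, in_ideal_gen s x <-> exists r : R, x = r * d.

Definition bezout_domain (R : idomainType) : Prop :=
  forall s : seq R, principal_gen s.

Definition colspace (R : comNzRingType) (m k : nat) (M : 'M[R]_(m, k)) (y : 'cV[R]_m) : Prop :=
  exists x : 'cV[R]_k, y = M *m x.

Definition same_colspace (R : comNzRingType) (m k l : nat)
  (M : 'M[R]_(m, k)) (N : 'M[R]_(m, l)) : Prop :=
  forall y, colspace M y <-> colspace N y.

Definition similar_mx (R : comUnitRingType) (n : nat) (M N : 'M[R]_n) : Prop :=
  exists S : 'M[R]_n, S \in unitmx /\ M = invmx S *m N *m S.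

(* Main.v *)
Require Import Defs.
From HB Require Import structures.
From mathcomp Require Import all_boot all_order all_algebra.
Set Implicit Arguments. Unset Strict Implicit. Unset Printing Implicit Defensive.
Import GRing.Theory.
Local Open Scope ring_scope.


Lemma bez_row (R : idomainType) k (a : 'I_k -> R) : bezout_domain R ->
  exists d (c e : 'I_k -> R), d = \sum_j c j * a j /\ forall j, a j = e j * d.
Proof.
move=> hb; set s := [seq a j | j <- enum 'I_k].
have sz : size s = k by rewrite size_map size_enum_ord.
have sn : forall i : 'I_k, s`_i = a i.
  by move=> i; rewrite (nth_map i) ?size_enum_ord // nth_ord_enum.
have [d hd] := hb s.
have [c' hc'] : in_ideal_gen s d by apply/hd; exists 1; rewrite mul1r.
have hj : forall j, exists r, a j = r * d.
  move=> j; apply/hd; rewrite /in_ideal_gen sz.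
  exists (fun i => (i == j)%:R); rewrite (bigD1 j) //= eqxx mul1r sn big1 ?addr0 //.
  by move=> i /negbTE ->; rewrite mul0r.
have [e he] := fin_all_exists hj.
move: c' hc'; rewrite sz => c' hc'.
exists d, c', e; split=> //; rewrite hc'; apply: eq_bigr => i _; by rewrite sn.
Qed.

Definition injmx (R : idomainType) n r (G : 'M[R]_(n, r)) :=
  forall x : 'cV_r, G *m x = 0 -> x = 0.

Lemma injmxP (R : idomainType) n r p (G : 'M[R]_(n, r)) (X : 'M_(r, p)) :
  injmx G -> G *m X = 0 -> X = 0.
Proof.
move=> h hX; apply/matrixP=> i j.
have := h (col j X); rewrite colE mulmxA hX mul0mx => /(_ erefl).
by rewrite -colE => /matrixP /(_ i 0); rewrite !mxE.
Qed.

Lemma mulcv11 (R : comNzRingType) m (g : 'cV[R]_m) (y : 'M_1) i :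
  (g *m y) i 0 = g i 0 * y 0 0.
Proof. by rewrite mxE big_ord1. Qed.

Lemma echelon (R : idomainType) : bezout_domain R -> forall n k (M : 'M[R]_(n, k)),
  exists r (G : 'M_(n, r)) (U : 'M_(k, r)) (W : 'M_(r, k)),
    [/\ injmx G, G = M *m U & M = G *m W].
Proof.
move=> hb; elim=> [|n IH]; last first.
  change (forall k (M : 'M[R]_(1 + n, k)), exists r (G : 'M_(1 + n, r)) (U : 'M_(k, r)) (W : 'M_(r, k)),
    [/\ injmx G, G = M *m U & M = G *m W]).
  move=> k M.
have [d [c [e [hd he]]]] := bez_row (fun j => M 0 j) hb.
have eM : M = col_mx (usubmx (M : 'M_(1 + n, k))) (dsubmx (M : 'M_(1 + n, k))).
  by rewrite vsubmxK.
have [d0|dn0] := eqVneq d 0.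
  have [r [G' [U [W [iG eG eW]]]]] := IH _ (dsubmx (M : 'M_(1 + n, k))).
  have u0 : usubmx (M : 'M_(1 + n, k)) = 0.
    apply/matrixP=> i j; rewrite !mxE (ord1 i).
    have -> : lshift n (0 : 'I_1) = 0 by apply: val_inj.
    by rewrite he d0 mulr0.
  exists r, (col_mx 0 G' : 'M_(1 + n, r)), U, W; split.
  - move=> x; rewrite mul_col_mx mul0mx => /eqP; rewrite col_mx_eq0 eqxx /=.
    by move/eqP/iG.
  - by rewrite eM mul_col_mx u0 mul0mx eG.
  - by rewrite mul_col_mx mul0mx -eW -u0.
set cv : 'cV_k := \col_j c j.
set ev : 'rV_k := \row_j e j.
set g0 : 'cV_(1 + n) := M *m cv.
have g00 : g0 0 0 = d.
  rewrite !mxE hd; apply: eq_bigr => j _; rewrite !mxE mulrC.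
  idtac.
  by [].
set M1 : 'M_(1 + n, k) := M - g0 *m ev.
have u1 : usubmx M1 = 0.
  apply/matrixP=> i j; rewrite !mxE (ord1 i) big_ord1 !mxE.
  have -> : lshift n (0 : 'I_1) = 0 by apply: val_inj.
  rewrite (_ : \sum_(j0 < k) M 0 j0 * cv j0 ord0 = d); last by rewrite -g00 /g0 mxE.
  by rewrite he mulrC subrr.
have [r [G' [U' [W' [iG eG eW]]]]] := IH _ (dsubmx M1).
have eM1 : M1 = col_mx 0 (dsubmx M1) by rewrite -u1 vsubmxK.
exists (1 + r)%N, (row_mx g0 (col_mx 0 G') : 'M_(1 + n, 1 + r)),
  (row_mx cv ((1%:M - cv *m ev) *m U')), (col_mx ev W'); split.
- move=> x hx.
  have ex : x = col_mx (usubmx x) (dsubmx x) by rewrite vsubmxK.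
  move: hx; rewrite ex mul_row_col mul_col_mx mul0mx => hx.
  have x0 : usubmx x = 0.
    have := congr1 (fun X : 'M_(1 + n, 1) => X (lshift n 0) 0) hx.
    rewrite /= mxE col_mxEu mulcv11 [X in _ + X]mxE [X in _ = X -> _]mxE addr0.
    have -> : lshift n (0 : 'I_1) = 0 by apply: val_inj.
    rewrite g00 => /eqP; rewrite mulf_eq0 (negbTE dn0) /= => /eqP h0.
    by apply/matrixP=> i j; rewrite (ord1 i) (ord1 j) h0 mxE.
  move: hx; rewrite x0 mulmx0 add0r => /eqP; rewrite col_mx_eq0 eqxx /= => /eqP /iG x1.
  by rewrite x1 col_mx0.
- rewrite mul_mx_row mulmxA mulmxBr mulmx1 mulmxA -/g0 -/M1 eM1 mul_col_mx mul0mx.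
  by rewrite -eG.
- by rewrite mul_row_col mul_col_mx mul0mx -eW -eM1 /M1 addrC subrK.
move=> k M.
  exists 0%N, 0, 0, 0; split; first by move=> x _; exact: flatmx0.
  - by apply/matrixP=> -[].
  - by apply/matrixP=> -[].
Qed.


Lemma core (R : comUnitRingType) n (A P Q EP E L K1 K2 : 'M[R]_n) :
  EP *m P = P -> L *m P = Q *m L *m EP -> Q *m K1 = 0 -> E *m L = L ->
  E *m K1 = 0 -> A *m L *m EP = EP -> K2 *m K1 *m (1%:M - EP) = 1%:M - EP ->
  similar_mx P Q.
Proof.
move=> h1 h2 h3 h4 h5 h6 h7.
pose S := L *m EP + K1 *m (1%:M - EP).
pose S' := A *m E + K2 *m (1%:M - E).
have t1 : A *m E *m (L *m EP) = EP by rewrite mulmxA -(mulmxA A E) h4 h6.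
have t2 : A *m E *m (K1 *m (1%:M - EP)) = 0 by rewrite mulmxA -(mulmxA A E) h5 mulmx0 mul0mx.
have t3 : K2 *m (1%:M - E) *m (L *m EP) = 0.
  by rewrite mulmxA -(mulmxA K2) mulmxBl mul1mx h4 subrr mulmx0 mul0mx.
have t4 : K2 *m (1%:M - E) *m (K1 *m (1%:M - EP)) = 1%:M - EP.
  by rewrite mulmxA -(mulmxA K2) mulmxBl mul1mx h5 subr0 h7.
have SS : S' *m S = 1%:M.
  rewrite /S /S' mulmxDl (mulmxDr (A *m E)) (mulmxDr (K2 *m _)) t1 t2 t3 t4.
  by rewrite addr0 add0r addrC subrK.
have SP : S *m P = Q *m S.
  rewrite /S mulmxDl -!mulmxA mulmxBl mul1mx h1 subrr mulmx0 addr0.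
  by rewrite mulmxDr !mulmxA h3 !mul0mx addr0 h2.
have [_ uS] := mulmx1_unit SS.
exists S; split=> //.
by rewrite -mulmxA -SP mulmxA mulVmx ?mul1mx.
Qed.

Lemma fld_grp (F : fieldType) n (M Z : 'M[F]_n) : M = M *m M *m Z ->
  M *m Z *m M = M /\ M *m Z *m Z *m M = M *m Z.
Proof.
move=> eM.
have sub : (M *m M <= M)%MS by apply: submxMl.
have : (\rank M <= \rank (M *m M))%N by rewrite {1}eM; apply: mxrankM_maxl.
rewrite (geq_leqif (mxrank_leqif_sup sub)) => /submxP [W eW].
have WM : W *m M = M *m Z.
  by rewrite {1}eM !mulmxA -(mulmxA W M M) -eW.
have MZM : M *m Z *m M = M by rewrite -WM -mulmxA -eW.
split=> //.
by rewrite -WM -(mulmxA W M Z) -(mulmxA W) MZM.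
Qed.

Lemma fr_inj (R : idomainType) m p (X Y : 'M[R]_(m,p)) :
  map_mx (@tofrac R) X = map_mx (@tofrac R) Y -> X = Y.
Proof.
move=> /matrixP h; apply/matrixP=> i j; have := h i j; rewrite !mxE => /eqP.
by rewrite tofrac_eq => /eqP.
Qed.

Lemma grpR (R : idomainType) n (M Z : 'M[R]_n) : M = M *m M *m Z ->
  M *m Z *m M = M /\ M *m Z *m Z *m M = M *m Z.
Proof.
move=> eM.
have := @fld_grp _ _ (map_mx (@tofrac R) M) (map_mx (@tofrac R) Z).
rewrite -!map_mxM -eM => /(_ erefl) [h1 h2]; by split; apply: fr_inj.
Qed.

Lemma rank_idem (F : fieldType) n (E : 'M[F]_n) : E *m E = E ->
  (\rank E + \rank (1%:M - E)%R)%N = n.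
Proof.
move=> EE; apply/eqP; rewrite eqn_leq; apply/andP; split.
  have := mxrank_mul_min E (1%:M - E).
  by rewrite mulmxBr mulmx1 EE subrr mxrank0 leqn0 subn_eq0.
by have := mxrank_add E (1%:M - E); rewrite addrC subrK mxrank1.
Qed.

Lemma rank_free (R : idomainType) n h (M : 'M[R]_n) (H : 'M_(n, h)) (Y : 'M_(h, n)) :
  Y *m H = 1%:M -> M = H *m Y -> H = M *m H ->
  \rank (map_mx (@tofrac R) M) = h.
Proof.
move=> YH eM eH.
have rH : \rank (map_mx (@tofrac R) H) = h.
  apply/eqP; rewrite eqn_leq rank_leq_col /=.
  have := mxrankM_maxr (map_mx (@tofrac R) Y) (map_mx (@tofrac R) H).
  by rewrite -map_mxM YH map_mx1 mxrank1.
apply/eqP; rewrite eqn_leq; apply/andP; split.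
  by rewrite -rH {1}eM map_mxM mxrankM_maxl.
by rewrite -{1}rH {1}eH map_mxM mxrankM_maxl.
Qed.

Lemma col_incl (R : comNzRingType) m k l (M : 'M[R]_(m,k)) (N : 'M[R]_(m,l)) :
  (forall y, colspace M y -> colspace N y) -> exists X : 'M_(l,k), M = N *m X.
Proof.
move=> h.
have hj : forall j : 'I_k, exists x : 'cV_l, col j M = N *m x.
  by move=> j; apply: h; exists (delta_mx j 0); rewrite colE.
have [xs hx] := fin_all_exists hj.
exists (\matrix_(i, j) xs j i 0); apply/matrixP=> i j.
have := congr1 (fun X : 'cV_m => X i 0) (hx j); rewrite !mxE => ->.
by apply: eq_bigr => t _; rewrite !mxE.
Qed.


Lemma pfx_r (T : pzRingType) (U V : T) : (forall Y : T, Y * U = Y * V) -> U = V.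
Proof. by move=> h; have := h 1; rewrite !mul1r. Qed.

Lemma alg (T : pzRingType) (a b c x1 x2 : T) :
  a = a * b * x1 -> b = b * a * x2 -> a * b * a = a * c * a ->
  a * b * (x1 * x2) * (a * b) = a * b ->
  c * a * (x2 * x1) * (c * a) = c * a ->
  c * a * (x2 * x1) * (x2 * x1) * (c * a) = c * a * (x2 * x1) ->
  c * a = c * a * (c * a) * (x2 * x1) ->
  (a * b * x1 * x2 * (a * b) = a * b) /\
      (c * a * x2 * x1 * x2 * x1 * (c * a * x2 * x1) * c * (a * b) =
        c * a * (c * a * x2 * x1 * x2 * x1 * (c * a * x2 * x1) * c) * (a * b * x1 * x2)) /\
      (c * a * x2 * x1 * (c * a * x2 * x1 * x2 * x1 * (c * a * x2 * x1) * c) =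
        c * a * x2 * x1 * x2 * x1 * (c * a * x2 * x1) * c) /\
      (a * (c * a * x2 * x1 * x2 * x1 * (c * a * x2 * x1) * c) * (a * b * x1 * x2) =
        a * b * x1 * x2).
Proof.
move=> eA eB hABA p1 q1 q2 hQZ.
have R_eA : forall Y, Y * a * b * x1 = Y * a.
  by move=> Y; rewrite -!mulrA (mulrA a b) -eA.
have R_eB : forall Y, Y * b * a * x2 = Y * b.
  by move=> Y; rewrite -!mulrA (mulrA b a) -eB.
have R_ABA : forall Y, Y * a * b * a = Y * a * c * a.
  by move=> Y; have := congr1 (GRing.mul Y) hABA; rewrite !mulrA.
have R_p1 : forall Y, Y * a * b * x1 * x2 * a * b = Y * a * b.
  by move=> Y; have := congr1 (GRing.mul Y) p1; rewrite !mulrA.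
have R_q1 : forall Y, Y * c * a * x2 * x1 * c * a = Y * c * a.
  by move=> Y; have := congr1 (GRing.mul Y) q1; rewrite !mulrA.
have R_q2 : forall Y, Y * c * a * x2 * x1 * x2 * x1 * c * a = Y * c * a * x2 * x1.
  by move=> Y; have := congr1 (GRing.mul Y) q2; rewrite !mulrA.
have R_QE : forall Y, Y * c * a * c * a * x2 * x1 = Y * c * a.
  by move=> Y; have := congr1 (GRing.mul Y) hQZ; rewrite !mulrA => h; rewrite -h.
have R_EBA : forall Y, Y * c * a * x2 * x1 * b * a = Y * c * a.
  move=> Y; rewrite -(R_q2 Y) (R_ABA (Y * c * a * x2 * x1 * x2 * x1 * c)).
  by rewrite (R_q2 Y) (R_q1 Y).
split; [ | split; [ | split]].
- by apply: pfx_r => Y; rewrite !mulrA (R_p1 Y).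
- apply: pfx_r => Y; rewrite !mulrA.
  rewrite (R_q1 (Y * c * a * x2 * x1 * x2 * x1)) (R_q2 Y).
  rewrite (R_QE Y) (R_q1 Y) (R_q1 Y) (R_eA (Y * c)).
  by rewrite -(R_eB (Y * c * a * x2 * x1)) (R_EBA Y).
- by apply: pfx_r => Y; rewrite !mulrA (R_q1 Y).
- apply: pfx_r => Y; rewrite !mulrA.
  rewrite (R_q1 (Y * a * c * a * x2 * x1 * x2 * x1)) (R_q2 (Y * a)).
  rewrite -(R_eB (Y * a * c * a * x2 * x1)) (R_EBA (Y * a)).
  by rewrite -(R_ABA Y) (R_eB (Y * a)).
Qed.


Lemma free_idem (R : idomainType) n (M : 'M[R]_n) : bezout_domain R -> M *m M = M ->
  exists h (H : 'M_(n, h)) (Y : 'M_(h, n)), [/\ M = H *m Y, Y *m H = 1%:M & H = M *m H].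
Proof.
move=> hb MM.
have [r [G [U [W [iG eG eW]]]]] := echelon hb M.
have MG : M *m G = G by rewrite {1}eG mulmxA MM -eG.
exists r, G, W; split=> //.
apply/eqP; rewrite -subr_eq0; apply/eqP; apply: (injmxP iG).
by rewrite mulmxBr mulmx1 mulmxA -eW MG subrr.
Qed.

Lemma pfx_eq (R : comNzRingType) n m (U V : 'M[R]_(n, m)) :
  (forall Y : 'M_n, Y *m U = Y *m V) -> U = V.
Proof. by move=> h; have := h 1%:M; rewrite !mul1mx. Qed.

Lemma rkl (R : idomainType) m p q (X : 'M[R]_(m, p)) (Y : 'M_(p, q)) :
  (\rank (map_mx (@tofrac R) (X *m Y)) <= \rank (map_mx (@tofrac R) X))%N.
Proof. by rewrite map_mxM mxrankM_maxl. Qed.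

Lemma rkr (R : idomainType) m p q (X : 'M[R]_(m, p)) (Y : 'M_(p, q)) :
  (\rank (map_mx (@tofrac R) (X *m Y)) <= \rank (map_mx (@tofrac R) Y))%N.
Proof. by rewrite map_mxM mxrankM_maxr. Qed.

Theorem corollary2p3 (R : idomainType) (n : nat) (A B C : 'M[R]_n) :
  bezout_domain R ->
  A *m B *m A = A *m C *m A ->
  same_colspace A (A *m B) ->
  same_colspace B (B *m A) ->
  similar_mx (A *m B) (C *m A).
Proof.
move=> hb hABA hA hB.
have [X1 eA] : exists X1, A = A *m B *m X1 by apply: col_incl => y /hA.
have [X2 eB] : exists X2, B = B *m A *m X2 by apply: col_incl => y /hB.
have hPZ : A *m B = A *m B *m (A *m B) *m (X1 *m X2).
  rewrite -!mulmxA; congr (A *m _); rewrite {1}eB -!mulmxA; congr (B *m _).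
  by rewrite {1}eA -!mulmxA.
have eA2 : A = A *m C *m A *m X2 *m X1.
  by rewrite -hABA {1}eA {1}eB !mulmxA.
have hQZ : C *m A = C *m A *m (C *m A) *m (X2 *m X1).
  by rewrite -!mulmxA; congr (C *m _); rewrite {1}eA2 !mulmxA.
have [p1 _] := grpR hPZ.
have [q1 q2] := grpR hQZ.
have R_eA : forall Y : 'M_n, Y *m A *m B *m X1 = Y *m A.
  by move=> Y; rewrite -!mulmxA (mulmxA A B) -eA.
have R_eB : forall Y : 'M_n, Y *m B *m A *m X2 = Y *m B.
  by move=> Y; rewrite -!mulmxA (mulmxA B A) -eB.
have R_ABA : forall Y : 'M_n, Y *m A *m B *m A = Y *m A *m C *m A.
  by move=> Y; have := congr1 (mulmx Y) hABA; rewrite !mulmxA.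
have R_p1 : forall Y : 'M_n, Y *m A *m B *m X1 *m X2 *m A *m B = Y *m A *m B.
  by move=> Y; have := congr1 (mulmx Y) p1; rewrite !mulmxA.
have R_q1 : forall Y : 'M_n, Y *m C *m A *m X2 *m X1 *m C *m A = Y *m C *m A.
  by move=> Y; have := congr1 (mulmx Y) q1; rewrite !mulmxA.
have R_q2 : forall Y : 'M_n,
    Y *m C *m A *m X2 *m X1 *m X2 *m X1 *m C *m A = Y *m C *m A *m X2 *m X1.
  by move=> Y; have := congr1 (mulmx Y) q2; rewrite !mulmxA.
have R_QE : forall Y : 'M_n, Y *m C *m A *m C *m A *m X2 *m X1 = Y *m C *m A.
  by move=> Y; have := congr1 (mulmx Y) hQZ; rewrite !mulmxA => h; rewrite -h.
have R_EBA : forall Y : 'M_n, Y *m C *m A *m X2 *m X1 *m B *m A = Y *m C *m A.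
  by move=> Y; rewrite -(R_q2 Y) R_ABA R_q2 R_q1.
pose EP := A *m B *m X1 *m X2.
pose E := C *m A *m X2 *m X1.
have EPid : EP *m EP = EP by apply: pfx_eq => Y; rewrite /EP !mulmxA (R_p1 Y).
have Eid : E *m E = E by apply: pfx_eq => Y; rewrite /E !mulmxA (R_q1 Y).
have QE : C *m A *m E = C *m A by apply: pfx_eq => Y; rewrite /E !mulmxA (R_QE Y).
have idemP : (1%:M - EP) *m (1%:M - EP) = 1%:M - EP.
  by rewrite mulmxBl mul1mx mulmxBr mulmx1 EPid subrr subr0.
have idemQ : (1%:M - E) *m (1%:M - E) = 1%:M - E.
  by rewrite mulmxBl mul1mx mulmxBr mulmx1 Eid subrr subr0.
have [hP [HP [YP [eHP YHP HHP]]]] := free_idem hb idemP.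
have [hQ [HQ [YQ [eHQ YHQ HHQ]]]] := free_idem hb idemQ.
have rkEP : \rank (map_mx (@tofrac R) EP) = \rank (map_mx (@tofrac R) A).
  apply/eqP; rewrite eqn_leq; apply/andP; split.
    by rewrite /EP (leq_trans (rkl _ _)) // (leq_trans (rkl _ _)) // (leq_trans (rkl _ _)) // rkl.
  have -> : A = EP *m (A *m B *m X1).
    by apply: pfx_eq => Y; rewrite /EP !mulmxA (R_p1 Y) (R_eA Y).
  by rewrite rkl.
have rkE : \rank (map_mx (@tofrac R) E) = \rank (map_mx (@tofrac R) A).
  apply/eqP; rewrite eqn_leq; apply/andP; split.
    by rewrite /E (leq_trans (rkl _ _)) // (leq_trans (rkl _ _)) // rkr.
  have -> : A = A *m E by rewrite /E !mulmxA -eA2.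
  by rewrite rkr.
have ehh : hP = hQ.
  have rP := rank_free YHP eHP HHP.
  have rQ := rank_free YHQ eHQ HHQ.
  have iP := @rank_idem _ _ (map_mx (@tofrac R) EP).
  have iQ := @rank_idem _ _ (map_mx (@tofrac R) E).
  rewrite -map_mxM EPid in iP.
  rewrite -map_mxM Eid in iQ.
  rewrite map_mxB map_mx1 in rP. rewrite map_mxB map_mx1 in rQ.
  have e1 := iP erefl; have e2 := iQ erefl; rewrite rP rkEP in e1; rewrite rQ rkE in e2.
  by apply/eqP; rewrite -(eqn_add2l (\rank (map_mx (@tofrac R) A))) e1 e2.
subst hQ.
have EHQ : E *m HQ = 0 by rewrite {1}HHQ mulmxA mulmxBr mulmx1 Eid subrr mul0mx.
have QHQ : C *m A *m HQ = 0 by rewrite -QE -mulmxA EHQ mulmx0.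
have h3 : C *m A *m (HQ *m YP) = 0 by rewrite mulmxA QHQ mul0mx.
have h5 : E *m (HQ *m YP) = 0 by rewrite mulmxA EHQ mul0mx.
have h7 : HP *m YQ *m (HQ *m YP) *m (1%:M - EP) = 1%:M - EP.
  by rewrite !mulmxA -(mulmxA HP YQ HQ) YHQ mulmx1 -eHP idemP.
rewrite !mulmxE in eA eB hABA p1 q1 q2 hQZ.
have [g1 [g2 [g4 g6]]] := @alg _ A B C X1 X2 eA eB hABA p1 q1 q2 hQZ.
apply: (@core _ _ A (A *m B) (C *m A) EP E (E *m X2 *m X1 *m E *m C)
                (HQ *m YP) (HP *m YQ)) => //; rewrite /EP /E !mulmxE //.
Qed.
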